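(* Fix $\lambda>0$. For a non-negative $n\times m$ matrix $M$ and positive vectors $\mathbf{r}\in(0,\infty)^n$, $\mathbf{c}\in(0,\infty)^m$, let $\Phi(M,\mathbf{r},\mathbf{c})$ denote the limit (when it exists) of $(\mathbf{r},\mathbf{c})$-Sinkhorn scaling applied to $M^{[\lambda]}$. Let $M$ be non-negative and $\mathbf{r},\mathbf{c}$ positive, and let $M^{\epsilon_1}$, $\mathbf{r}^{\epsilon_2}$, $\mathbf{c}^{\epsilon_3}$ be a non-negative matrix and positive vectors whose entries differ from those of $M$, $\mathbf{r}$, $\mathbf{c}$ by at most $\epsilon_1,\epsilon_2,\epsilon_3$ respectively. If $\Phi(M^{\epsilon_1},\mathbf{r}^{\epsilon_2},\mathbf{c}^{\epsilon_3})$ and $\Phi(M,\mathbf{r},\mathbf{c})$ exist, then $\Phi(M^{\epsilon_1},\mathbf{r}^{\epsilon_2},\mathbf{c}^{\epsilon_3})\to\Phi(M,\mathbf{r},\mathbf{c})$ as $M^{\epsilon_1}\to M$, $\mathbf{r}^{\epsilon_2}\to\mathbf{r}$, $\mathbf{c}^{\epsilon_3}\to\mathbf{c}$.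
   Context: $M^{[\lambda]}$ denotes the matrix with entries $(M_{ij})^{\lambda}$ (with $0^\lambda=0$). $(\mathbf{r},\mathbf{c})$-Sinkhorn scaling of a non-negative matrix $A$ is the iterated alternation of rescaling each row $i$ so that its sum equals $r_i$ and rescaling each column $j$ so that its sum equals $c_j$; its limit, when it exists, is a matrix with row sums $\mathbf{r}$ and column sums $\mathbf{c}$. Distances between vectors and matrices are measured in the $\ell^\infty$ norm (maximum entrywise difference). *)

(* Defs.v *)
From HB Require Import structures.
From mathcomp Require Import all_boot all_order all_algebra.
From mathcomp Require Import all_classical all_reals all_analysis.
Set Implicit Arguments. Unset Strict Implicit. Unset Printing Implicit Defensive.
Import Order.TTheory GRing.Theory Num.Theory.
Import numFieldNormedType.Exports.
Local Open Scope ring_scope.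
Local Open Scope classical_set_scope.

Section Sinkhorn.
Variables (R : realType) (n m : nat).

(* entrywise power M^[lam], with 0^lam = 0 for lam > 0 (powR 0 lam = 0) *)
Definition mx_pow (lam : R) (M : 'M[R]_(n, m)) : 'M[R]_(n, m) :=
  \matrix_(i, j) (M i j `^ lam).

Definition row_sum (A : 'M[R]_(n, m)) (i : 'I_n) : R := \sum_(j < m) A i j.
Definition col_sum (A : 'M[R]_(n, m)) (j : 'I_m) : R := \sum_(i < n) A i j.

Definition row_scale (r : 'I_n -> R) (A : 'M[R]_(n, m)) : 'M[R]_(n, m) :=
  \matrix_(i, j) (A i j * (r i / row_sum A i)).
Definition col_scale (c : 'I_m -> R) (A : 'M[R]_(n, m)) : 'M[R]_(n, m) :=
  \matrix_(i, j) (A i j * (c j / col_sum A j)).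

(* the Sinkhorn half-step sequence: s 0 = A, s (2k+1) = row-scaling of s (2k),
   s (2k+2) = column-scaling of s (2k+1) *)
Fixpoint sinkhorn_seq (r : 'I_n -> R) (c : 'I_m -> R) (A : 'M[R]_(n, m)) (k : nat)
  : 'M[R]_(n, m) :=
  match k with
  | 0 => A
  | k'.+1 => if odd k then row_scale r (sinkhorn_seq r c A k')
             else col_scale c (sinkhorn_seq r c A k')
  end.

Definition sinkhorn_defined (r : 'I_n -> R) (c : 'I_m -> R) (A : 'M[R]_(n, m)) : Prop :=
  forall k : nat,
    if ~~ odd k then forall i, row_sum (sinkhorn_seq r c A k) i != 0
    else forall j, col_sum (sinkhorn_seq r c A k) j != 0.

Definition sinkhorn_limit (lam : R) (M : 'M[R]_(n, m)) (r : 'I_n -> R) (c : 'I_m -> R)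
  (P : 'M[R]_(n, m)) : Prop :=
  sinkhorn_defined r c (mx_pow lam M) /\
  sinkhorn_seq r c (mx_pow lam M) @ \oo --> P.

Definition nonneg_mx (M : 'M[R]_(n, m)) : Prop := forall i j, 0 <= M i j.
Definition pos_vec (k : nat) (v : 'I_k -> R) : Prop := forall i, 0 < v i.

End Sinkhorn.

(* Main.v *)
Require Import Defs.
From HB Require Import structures.
From mathcomp Require Import all_boot all_order all_algebra.
From mathcomp Require Import all_classical all_reals all_analysis.
From mathcomp Require Import ring lra.
Import Order.TTheory GRing.Theory Num.Theory.
Import numFieldNormedType.Exports.
Local Open Scope ring_scope.
Local Open Scope classical_set_scope.

Section Reals.
Context {R : realType}.
Implicit Types x y z a b v e : R.

Lemma ln_le_sub1 z : 0 < z -> ln z <= z - 1.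
Proof.
move=> z0; rewrite -ler_expR lnK ?posrE //.
by have := expR_ge1Dx (z - 1); rewrite addrCA subrr addr0.
Qed.

Lemma ln_lt_sub1 z : 0 < z -> z != 1 -> ln z < z - 1.
Proof.
move=> z0 z1; rewrite -ltr_expR lnK ?posrE //.
have := @expR_gt1Dx R (z - 1); rewrite addrCA subrr addr0; apply.
by rewrite subr_eq0.
Qed.

Lemma gibbs x y : 0 <= x -> 0 < y -> x - y <= x * ln x - x * ln y.
Proof.
rewrite le_eqVlt => /predU1P[<- y0|x0 y0]; first by rewrite !mul0r subrr sub0r oppr_le0 ltW.
have := @ln_le_sub1 (y / x) (divr_gt0 y0 x0).
rewrite ln_div ?posrE // => h.
have := ler_wpM2l (ltW x0) h.
rewrite mulrBr mulrBr mulr1 mulrCA divff ?gt_eqF // mulr1.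
by move=> h2; rewrite -opprB lerNl opprB (le_trans h2) // lerB.
Qed.

Lemma gibbs_lt x y : 0 <= x -> 0 < y -> x != y -> x - y < x * ln x - x * ln y.
Proof.
rewrite le_eqVlt => /predU1P[<- y0 _|x0 y0 xy]; first by rewrite !mul0r subrr sub0r oppr_lt0.
have yx1 : y / x != 1.
  apply: contra xy => /eqP h; have hy : y = y / x * x by rewrite divfK // gt_eqF.
  by rewrite hy h mul1r.
have := @ln_lt_sub1 (y / x) (divr_gt0 y0 x0) yx1.
rewrite ln_div ?posrE // => h.
have h2 : x * (ln y - ln x) < x * (y / x - 1) by rewrite ltr_pM2l.
move: h2; rewrite mulrBr mulrBr mulr1 mulrCA divff ?gt_eqF // mulr1 => h2.
by rewrite -opprB ltrNl opprB (lt_le_trans h2) // lerB.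
Qed.

Lemma conv_ge0 a b : 0 <= a -> 0 <= b ->
  0 <= a * ln a + b * ln b - 2 * (((a + b) / 2) * ln ((a + b) / 2)).
Proof.
move=> a0 b0; set m := (a + b) / 2.
have m0 : 0 <= m by rewrite /m divr_ge0 // addr_ge0.
have hm : 2 * m = a + b by rewrite /m mulrC divfK // pnatr_eq0.
case/boolP: (m == 0) => [/eqP me|mn].
  have ab0 : a + b = 0 by rewrite -hm me mulr0.
  have /andP[/eqP a00 /eqP b00] : (a == 0) && (b == 0) by rewrite -paddr_eq0 // ab0.
  by rewrite me a00 b00 !mul0r !add0r mulr0 oppr0.
have mp : 0 < m by rewrite lt_neqAle eq_sym mn m0.
have h1 := @gibbs a m a0 mp; have h2 := @gibbs b m b0 mp.
rewrite mulrA hm.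
have := lerD h1 h2.
have -> : a - m + (b - m) = 0 by rewrite addrACA -opprD -[m + m]mulr2n -mulr_natl hm subrr.
move=> h; apply: (le_trans h); lra.
Qed.

Lemma conv_eq a b : 0 <= a -> 0 <= b ->
  a * ln a + b * ln b - 2 * (((a + b) / 2) * ln ((a + b) / 2)) = 0 -> a = b.
Proof.
move=> a0 b0; set m := (a + b) / 2.
have m0 : 0 <= m by rewrite /m divr_ge0 // addr_ge0.
have hm : 2 * m = a + b by rewrite /m mulrC divfK // pnatr_eq0.
case/boolP: (m == 0) => [/eqP me|mn].
  have ab0 : a + b = 0 by rewrite -hm me mulr0.
  have /andP[/eqP a00 /eqP b00] : (a == 0) && (b == 0) by rewrite -paddr_eq0 // ab0.
  by rewrite a00 b00.
have mp : 0 < m by rewrite lt_neqAle eq_sym mn m0.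
apply: contra_eq => ab.
have am : a != m.
  apply: contra ab => /eqP am; apply/eqP.
  by move: hm; rewrite -am => /eqP; rewrite mulr_natl mulr2n eq_sym => /eqP /addrI.
have h1 := @gibbs_lt a m a0 mp am; have h2 := @gibbs b m b0 mp.
rewrite mulrA hm.
have := ltr_leD h1 h2.
have -> : a - m + (b - m) = 0 by rewrite addrACA -opprD -[m + m]mulr2n -mulr_natl hm subrr.
move=> h; apply/eqP => h0; move: h; lra.
Qed.

Lemma xlnx_small v e : 0 < e -> `|v| < Num.min 1 ((e / 2) ^+ 2) -> `|v * ln v| < e.
Proof.
move=> e0; case: (leP v 0) => [v0 _|vp]; first by rewrite ln0 // mulr0 normr0.
rewrite gtr0_norm // lt_min => /andP[v1 ve].
have lnv : ln v <= 0 by apply: ln_le0; exact: ltW.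
set s := Num.sqrt v.
have sp : 0 < s by rewrite sqrtr_gt0.
have hv : v = s * s by rewrite -expr2 sqr_sqrtr // ltW.
have hl : ln v = ln s + ln s by rewrite hv lnM ?posrE.
have sinv : 0 < s^-1 by rewrite invr_gt0.
have hinv := @ln_le_sub1 (s^-1) sinv.
rewrite lnV ?posrE // in hinv.
have hs2 : s < e / 2.
  have e20 : 0 < e / 2 by rewrite divr_gt0.
  rewrite expr2 hv in ve; nra.
have h3 : s * - ln s <= 1 - s.
  have := ler_wpM2l (ltW sp) hinv; rewrite mulrBr mulfV ?gt_eqF // mulr1.
  by [].
rewrite ler0_norm; last by rewrite mulr_ge0_le0 // ltW.
rewrite hl hv; nra.
Qed.


Lemma lim_le {u : R^nat} {l C : R} : u @ \oo --> l -> (\forall k \near \oo, u k <= C) -> l <= C.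
Proof.
move=> hu hC; exact: (cvgr_to_le hu hC).
Qed.

Lemma lim_ge {u : R^nat} {l C : R} : u @ \oo --> l -> (\forall k \near \oo, C <= u k) -> C <= l.
Proof.
move=> hu hC; exact: (cvgr_to_ge hu hC).
Qed.

Lemma lim_eq {u : R^nat} {l C : R} : u @ \oo --> l -> (\forall k \near \oo, u k = C) -> l = C.
Proof.
move=> hu hC.
have h1 : l <= C by apply: (lim_le hu); apply: filterS hC => k ->.
have h2 : C <= l by apply: (lim_ge hu); apply: filterS hC => k ->.
by apply/eqP; rewrite eq_le h1 h2.
Qed.

Lemma incr_ge (s : nat -> nat) : increasing_seq s -> forall k, (k <= s k)%N.
Proof.
move/increasing_seqP => hs; elim=> [|k ih] //.
by apply: leq_ltn_trans ih _; exact: hs.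
Qed.

Lemma cvg_ge_id (s : nat -> nat) : (forall k, (k <= s k)%N) -> s @ \oo --> \oo.
Proof.
move=> hs P [N _ PN]; exists N => // k /= hk; apply: PN => /=.
exact: leq_trans hk (hs k).
Qed.

Lemma cvg_sub {s : nat -> nat} {u : R^nat} {l : R} : (forall k, (k <= s k)%N) ->
  u @ \oo --> l -> (fun k => u (s k)) @ \oo --> l.
Proof.
move=> hs hu; exact: (cvg_comp s u (@cvg_ge_id s hs) hu).
Qed.

Lemma cvg_xlnx {u : R^nat} {x : R} : 0 <= x -> u @ \oo --> x ->
  (fun k => u k * ln (u k)) @ \oo --> x * ln x.
Proof.
rewrite le_eqVlt => /predU1P[<-|x0] hu.
  rewrite mul0r; apply/cvgrPdist_lt => e e0.
  have m0 : 0 < Num.min 1 ((e / 2) ^+ 2).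
    by rewrite lt_min ltr01 exprn_gt0 // divr_gt0.
  move/cvgrPdist_lt: hu => /(_ _ m0); apply: filterS => k hk.
  by rewrite sub0r normrN; apply: xlnx_small => //; move: hk; rewrite sub0r normrN.
apply: cvgM => //.
exact: (continuous_cvg _ (continuous_ln x0) hu).
Qed.

Lemma cvg_ln {u : R^nat} {x : R} : 0 < x -> u @ \oo --> x ->
  (fun k => ln (u k)) @ \oo --> ln x.
Proof. by move=> x0 hu; exact: (continuous_cvg _ (continuous_ln x0) hu). Qed.

End Reals.

Lemma cvg_sumI {R : realType} {I : finType} (F : I -> nat -> R) (L : I -> R) :
  (forall t, F t @ \oo --> L t) -> (fun k => \sum_t F t k) @ \oo --> \sum_t L t.
Proof. by move=> h; apply: cvg_big => //; exact: add_continuous. Qed.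

Lemma coordc (R : realType) n m (s : nat -> 'M[R]_(n,m)) (P : 'M[R]_(n,m)) i j :
  s @ \oo --> P -> (fun k => s k i j) @ \oo --> P i j.
Proof. move=> hs; exact: (continuous_cvg _ (@coord_continuous _ _ _ i j P) hs). Qed.

Lemma ev_all {P : nat -> Prop} : (forall k, P k) -> \forall k \near \oo, P k.
Proof. by move=> h; exists 0%N. Qed.

Section Sk.
Variables (R : realType) (n m : nat).
Implicit Types (A X P Q B : 'M[R]_(n, m)) (r : 'I_n -> R) (c : 'I_m -> R).

Definition phi (X B : 'M[R]_(n, m)) : R :=
  \sum_i \sum_j (X i j * ln (X i j) - X i j * ln (B i j)).

Lemma row_sum_ge0 X i : (forall j, 0 <= X i j) -> 0 <= row_sum X i.
Proof. by move=> h; apply: sumr_ge0 => j _. Qed.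
Lemma col_sum_ge0 X j : (forall i, 0 <= X i j) -> 0 <= col_sum X j.
Proof. by move=> h; apply: sumr_ge0 => i _. Qed.

Lemma seq_struct A r c : nonneg_mx A -> pos_vec r -> pos_vec c ->
  sinkhorn_defined r c A -> forall k, exists x : 'I_n -> R, exists y : 'I_m -> R,
  [/\ forall i, 0 < x i, forall j, 0 < y j &
      forall i j, sinkhorn_seq r c A k i j = A i j * x i * y j].
Proof.
move=> hA hr hc hd; elim=> [|k [x [y [hx hy hS]]]].
  by exists (fun=> 1), (fun=> 1); split => // i j; rewrite !mulr1.
have hge : forall i j, 0 <= sinkhorn_seq r c A k i j.
  by move=> i j; rewrite hS mulr_ge0 ?mulr_ge0 // ltW.
have := hd k; rewrite /=; case: (odd k) => /= hk.
- exists x, (fun j => y j * (c j / col_sum (sinkhorn_seq r c A k) j)); split => //.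
    move=> j; rewrite mulr_gt0 // divr_gt0 //.
    by rewrite lt_neqAle eq_sym hk col_sum_ge0.
  by move=> i j; rewrite mxE hS; ring.
- exists (fun i => x i * (r i / row_sum (sinkhorn_seq r c A k) i)), y; split => //.
    move=> i; rewrite mulr_gt0 // divr_gt0 //.
    by rewrite lt_neqAle eq_sym hk row_sum_ge0.
  by move=> i j; rewrite mxE hS; ring.
Qed.

Lemma row_sum_odd A r c : sinkhorn_defined r c A -> forall k i,
  row_sum (sinkhorn_seq r c A k.*2.+1) i = r i.
Proof.
move=> hd k i; rewrite /= odd_double /=.
have := hd k.*2; rewrite odd_double /= => /(_ i) h.
rewrite /row_sum; under eq_bigr do rewrite mxE.
by rewrite -mulr_suml -/(row_sum _ i) mulrCA divff // mulr1.
Qed.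

Lemma col_sum_even A r c : sinkhorn_defined r c A -> forall k j,
  col_sum (sinkhorn_seq r c A k.*2.+2) j = c j.
Proof.
move=> hd k j; rewrite /= odd_double /=.
have := hd k.*2.+1; rewrite /= odd_double /= => /(_ j) h.
rewrite /col_sum; under eq_bigr do rewrite mxE.
by rewrite -mulr_suml -/(col_sum _ j) mulrCA divff // mulr1.
Qed.


Lemma phiE X B : phi X B = \sum_i \sum_j X i j * ln (X i j) - \sum_i \sum_j X i j * ln (B i j).
Proof. by rewrite /phi -sumrB; apply: eq_bigr => i _; rewrite -sumrB. Qed.

Lemma sum_rows X : \sum_i \sum_j X i j = \sum_i row_sum X i.
Proof. by []. Qed.

Lemma OPT A r c P : nonneg_mx A -> pos_vec r -> pos_vec c ->
  sinkhorn_defined r c A -> sinkhorn_seq r c A @ \oo --> P ->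
  [/\ (forall i, row_sum P i = r i), (forall j, col_sum P j = c j),
      (forall i j, 0 <= P i j), (forall i j, A i j = 0 -> P i j = 0) &
      forall Q, (forall i j, 0 <= Q i j) -> (forall i, row_sum Q i = r i) ->
        (forall j, col_sum Q j = c j) -> (forall i j, A i j = 0 -> Q i j = 0) ->
        phi P A <= phi Q A].
Proof.
move=> hA hr hc hd hs.
set s := sinkhorn_seq r c A.
have hE i j : (fun k => s k i j) @ \oo --> P i j by exact: coordc.
have hst := @seq_struct A r c hA hr hc hd.
have hk1 : forall k, (k <= k.*2.+1)%N by move=> k; apply: (leq_trans (leq_addr k k)); rewrite addnn leqW.
have hk2 : forall k, (k <= k.*2.+2)%N by move=> k; apply: (leq_trans (leq_addr k k)); rewrite addnn !leqW.
have hrow i : row_sum P i = r i.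
  have h0 : (fun k => row_sum (s k) i) @ \oo --> row_sum P i.
    by rewrite /row_sum; apply: cvg_sumI => j; exact: hE.
  have h1 := cvg_sub hk1 h0.
  by apply: (lim_eq h1); apply: ev_all => k; exact: row_sum_odd.
have hcol j : col_sum P j = c j.
  have h0 : (fun k => col_sum (s k) j) @ \oo --> col_sum P j.
    by rewrite /col_sum; apply: cvg_sumI => i; exact: hE.
  have h1 := cvg_sub hk2 h0.
  by apply: (lim_eq h1); apply: ev_all => k; exact: col_sum_even.
have hP0 i j : 0 <= P i j.
  apply: (lim_ge (hE i j)); apply: ev_all => k.
  have [x [y [hx hy hS]]] := hst k.
  by rewrite hS mulr_ge0 ?mulr_ge0 // ltW.
have hPA i j : A i j = 0 -> P i j = 0.
  move=> hAij; apply: (lim_eq (hE i j)); apply: ev_all => k.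
  have [x [y [hx hy hS]]] := hst k.
  by rewrite hS hAij !mul0r.
split => // Q hQ0 hQr hQc hQA.
pose d k := \sum_i r i - \sum_i \sum_j s k i j - phi P (s k).
have hdk k : d k <= phi Q A - phi P A.
  have [x [y [hx hy hS]]] := hst k.
  pose L := \sum_i r i * ln (x i) + \sum_j c j * ln (y j).
  have lin X : (forall i, row_sum X i = r i) -> (forall j, col_sum X j = c j) ->
      (forall i j, A i j = 0 -> X i j = 0) ->
      \sum_i \sum_j X i j * ln (s k i j) = \sum_i \sum_j X i j * ln (A i j) + L.
    move=> hXr hXc hXA.
    have e1 : forall i j, X i j * ln (s k i j) =
        X i j * ln (A i j) + X i j * ln (x i) + X i j * ln (y j).
      move=> i j; have [h0|hpos] := eqVneq (A i j) 0.
        by rewrite (hXA _ _ h0) !mul0r !addr0.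
      have Ap : 0 < A i j by rewrite lt_neqAle eq_sym hpos hA.
      rewrite hS lnM ?posrE ?mulr_gt0 // lnM ?posrE //.
      by rewrite !mulrDr.
    under eq_bigr do under eq_bigr do rewrite e1.
    rewrite /L.
    under eq_bigr do rewrite big_split big_split /=.
    rewrite big_split big_split /= -addrA; congr (_ + _); congr (_ + _).
      apply: eq_bigr => i _; rewrite -mulr_suml; congr (_ * _); exact: hXr.
    rewrite exchange_big /=; apply: eq_bigr => j _; rewrite -mulr_suml; congr (_ * _); exact: hXc.
  have eq1 X : (forall i, row_sum X i = r i) -> (forall j, col_sum X j = c j) ->
      (forall i j, A i j = 0 -> X i j = 0) -> phi X A = phi X (s k) + L.
    move=> hXr hXc hXA; rewrite !phiE (lin X hXr hXc hXA); ring.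
  rewrite (eq1 Q hQr hQc hQA) (eq1 P hrow hcol hPA).
  have hg : \sum_i r i - \sum_i \sum_j s k i j <= phi Q (s k).
    have -> : \sum_i r i - \sum_i \sum_j s k i j = \sum_i \sum_j (Q i j - s k i j).
      rewrite -sumrB; apply: eq_bigr => i _; rewrite sumrB; congr (_ - _).
      by rewrite -hQr.
    apply: ler_sum => i _; apply: ler_sum => j _.
    have [h0|hpos] := eqVneq (A i j) 0.
      by rewrite (hQA _ _ h0) hS h0 !mul0r subrr.
    have Ap : 0 < A i j by rewrite lt_neqAle eq_sym hpos hA.
    apply: gibbs => //; rewrite hS mulr_gt0 // mulr_gt0 //.
  rewrite /d; move: hg; set a := phi Q (s k); set b := phi P (s k); lra.
have hd0 : d @ \oo --> 0.
  have -> : 0 = \sum_i r i - \sum_i \sum_j P i j - phi P P.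
    have hsP : \sum_i \sum_j P i j = \sum_i r i by apply: eq_bigr => i _; exact: hrow.
    rewrite hsP subrr sub0r /phi big1 ?oppr0 // => i _.
    by rewrite big1 // => j _; exact: subrr.
  apply: cvgB; first apply: cvgB; first exact: cvg_cst.
    by apply: cvg_sumI => i; apply: cvg_sumI => j; exact: hE.
  apply: cvg_sumI => i; apply: cvg_sumI => j; apply: cvgB; first exact: cvg_cst.
  have [h0|hpos] := eqVneq (P i j) 0.
    rewrite h0 mul0r.
    have -> : (fun k => 0 * ln (s k i j)) = fun=> 0 by apply: funext => k; rewrite mul0r.
    exact: cvg_cst.
  have Pp : 0 < P i j by rewrite lt_neqAle eq_sym hpos hP0.
  apply: cvgM; first exact: cvg_cst.
  exact: cvg_ln.
have := lim_le hd0 (ev_all hdk).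
by rewrite subr_ge0.
Qed.

End Sk.
Arguments phi {R n m}.
Arguments OPT {R n m A r c P}.

Lemma bounded_of {R : realType} (v : R^nat) B : (forall k, `|v k| <= B) -> bounded_fun v.
Proof.
move=> hB; rewrite /bounded_fun /bounded_near; near=> M => k _ /=.
apply: le_trans (hB k) _; near: M; apply: nbhs_pinfty_ge; exact: num_real.
Unshelve. all: by end_near. Qed.

Lemma bw_list {R : realType} {T : eqType} (u : nat -> T -> R) :
  (forall t, exists B : R, forall k, `|u k t| <= B) ->
  forall s : seq T, exists2 sg : nat -> nat, increasing_seq sg &
    exists q : T -> R, forall t, t \in s -> (fun k => u (sg k) t) @ \oo --> q t.
Proof.
move=> hb; elim=> [|p s [sg hsg [q hq]]].
  by exists id => //; exists (fun=> 0).
have [B hB] := hb p.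
have hbd : bounded_fun (fun k => u (sg k) p).
  by apply: (@bounded_of R _ B) => k; exact: hB.
have [tau htau hc] := bolzano_weierstrass hbd.
move/cvg_ex: hc => [l hl].
exists (sg \o tau).
  by move=> a b /=; rewrite hsg; exact: htau.
exists (fun t => if t == p then l else q t) => t.
rewrite inE; case: eqP => [->|tp] /= ht; first exact: hl.
exact: (cvg_sub (@incr_ge tau htau) (hq t ht)).
Qed.

Lemma bw_mx {R : realType} {n m : nat} (u : nat -> 'M[R]_(n, m)) :
  (forall i j, exists B : R, forall k, `|u k i j| <= B) ->
  exists2 sg : nat -> nat, increasing_seq sg &
    exists Q : 'M[R]_(n, m), forall i j, (fun k => u (sg k) i j) @ \oo --> Q i j.
Proof.
move=> hb.
have hb' : forall t : 'I_n * 'I_m, exists B : R, forall k, `|u k t.1 t.2| <= B.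
  by move=> [i j]; exact: hb.
have [sg hsg [q hq]] := @bw_list R _ (fun k (t : 'I_n * 'I_m) => u k t.1 t.2) hb' (enum {: 'I_n * 'I_m}).
exists sg => //; exists (\matrix_(i, j) q (i, j)) => i j; rewrite mxE.
by apply: (hq (i, j)); rewrite mem_enum.
Qed.

Section Helpers.
Context {R : realType}.

Lemma close_cvg {v w : R^nat} {a : R} : (forall k, `|v k - a| <= w k) ->
  w @ \oo --> 0 -> v @ \oo --> a.
Proof.
move=> hvw /cvgrPdist_lt hw; apply/cvgrPdist_lt => e e0.
apply: filterS (hw e e0) => k; rewrite sub0r normrN => hk.
by rewrite distrC (le_lt_trans (hvw k)) // (le_lt_trans (ler_norm _)).
Qed.

Lemma ev_gt {v : R^nat} {a b : R} : v @ \oo --> a -> b < a -> \forall k \near \oo, b < v k.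
Proof.
move=> /cvgrPdist_lt hv hb; have e0 : 0 < a - b by rewrite subr_gt0.
apply: filterS (hv _ e0) => k; rewrite ltr_distlC => /andP[h _]; lra.
Qed.

Lemma ev_lt {v : R^nat} {a b : R} : v @ \oo --> a -> a < b -> \forall k \near \oo, v k < b.
Proof.
move=> /cvgrPdist_lt hv hb; have e0 : 0 < b - a by rewrite subr_gt0.
apply: filterS (hv _ e0) => k; rewrite ltr_distlC => /andP[_ h]; lra.
Qed.

Lemma cvg_uniq {v : R^nat} {a b : R} : v @ \oo --> a -> v @ \oo --> b -> a = b.
Proof.
move=> ha hb; have hab : (fun k => v k - v k) @ \oo --> a - b by apply: cvgB.
have := lim_eq hab (ev_all (fun k => subrr (v k))).
by move/eqP; rewrite subr_eq0 => /eqP.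
Qed.

Lemma sum_le_elem (I : finType) (F : I -> R) t0 : (forall t, F t <= 0) ->
  \sum_t F t <= F t0.
Proof.
move=> hF; rewrite (bigD1 t0) //= gerDl; apply: sumr_le0 => t _; exact: hF.
Qed.

Lemma ev_false : (\forall k \near \oo, False) -> False.
Proof. by move=> [N _ hN]; exact: (hN N (leqnn N)). Qed.

End Helpers.

Lemma entry_le_row {R : realType} {n m} (X : 'M[R]_(n, m)) i j :
  (forall j, 0 <= X i j) -> X i j <= row_sum X i.
Proof.
move=> h; rewrite /row_sum (bigD1 j) //= lerDl; apply: sumr_ge0 => k _; exact: h.
Qed.

Lemma ev_and {P Q : nat -> Prop} : (\forall k \near \oo, P k) -> (\forall k \near \oo, Q k) ->
  \forall k \near \oo, P k /\ Q k.
Proof.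
move=> [N1 _ h1] [N2 _ h2]; exists (maxn N1 N2) => // k hk; split.
  by apply: h1; apply: leq_trans hk; exact: leq_maxl.
by apply: h2; apply: leq_trans hk; exact: leq_maxr.
Qed.

Section Ids.
Context {R : realType}.
Lemma entry_id1 (x p d a lx lp : R) : x = p + d ->
  x * lx - x * a - (p * lp - p * a) = x * lx - p * lp - d * a + 0.
Proof. by move=> ->; ring. Qed.
Lemma entry_id2 (x p q a lx lp : R) : x = p + (0 - q) / 2 ->
  x * lx - x * a - (p * lp - p * a) = x * lx - p * lp - 0 + q / 2 * a.
Proof. by move=> ->; ring. Qed.
Lemma entry_id3 (x q d a lx lq : R) : x = q + d ->
  x * lx - q * lq - d * a = x * lx - x * a - (q * lq - q * a).
Proof. by move=> ->; ring. Qed.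
End Ids.

Theorem proposition4 (R : realType) (n m : nat) (lam : R) (hlam : 0 < lam)
  (M : 'M[R]_(n, m)) (r : 'I_n -> R) (c : 'I_m -> R) (P : 'M[R]_(n, m))
  (hM : nonneg_mx M) (hr : pos_vec r) (hc : pos_vec c)
  (hP : sinkhorn_limit lam M r c P) :
  forall eps : R, 0 < eps ->
  exists2 delta : R, 0 < delta &
    forall (M' : 'M[R]_(n, m)) (r' : 'I_n -> R) (c' : 'I_m -> R) (P' : 'M[R]_(n, m)),
      nonneg_mx M' -> pos_vec r' -> pos_vec c' ->
      (forall i j, `|M' i j - M i j| <= delta) ->
      (forall i, `|r' i - r i| <= delta) ->
      (forall j, `|c' j - c j| <= delta) ->
      sinkhorn_limit lam M' r' c' P' ->
      forall i j, `|P' i j - P i j| < eps.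
Proof.
move=> eps heps.
apply: contrapT => Hno.
have lam0 : lam != 0 by rewrite gt_eqF.
pose A := mx_pow lam M.
have hA : nonneg_mx A by move=> i j; rewrite mxE powR_ge0.
have AE i j : A i j = M i j `^ lam by rewrite mxE.
case: hP => hPd hPs.
have [hPr hPc hP0 hPA hPopt] := OPT hA hr hc hPd hPs.
have hPM i j : M i j = 0 -> P i j = 0 by move=> h; apply: hPA; rewrite AE h powR0.
have bad : forall k : nat, exists t : ('M[R]_(n, m) * ('I_n -> R) * ('I_m -> R) * 'M[R]_(n, m)) * ('I_n * 'I_m),
  nonneg_mx t.1.1.1.1 /\ pos_vec t.1.1.1.2 /\ pos_vec t.1.1.2 /\
      (forall i j, `|t.1.1.1.1 i j - M i j| <= k.+1%:R^-1) /\
      (forall i, `|t.1.1.1.2 i - r i| <= k.+1%:R^-1) /\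
      (forall j, `|t.1.1.2 j - c j| <= k.+1%:R^-1) /\
      sinkhorn_limit lam t.1.1.1.1 t.1.1.1.2 t.1.1.2 t.1.2 /\
      eps <= `|t.1.2 t.2.1 t.2.2 - P t.2.1 t.2.2|.
  move=> k; apply: contrapT => nb; apply: Hno.
  exists k.+1%:R^-1; first by rewrite invr_gt0 ltr0n.
  move=> M' r' c' P' h1 h2 h3 h4 h5 h6 h7 i j; rewrite ltNge; apply/negP => hge.
  by apply: nb; exists ((M', r', c', P'), (i, j)).
have [T hT] := choice bad.
pose Ms k := (T k).1.1.1.1. pose rs k := (T k).1.1.1.2.
pose cs k := (T k).1.1.2. pose Ps k := (T k).1.2.
have hMs k : nonneg_mx (Ms k) by case: (hT k).
have hMd k i j : `|Ms k i j - M i j| <= k.+1%:R^-1 by case: (hT k) => _ [_ [_ [h _]]]; exact: h.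
have hrd k i : `|rs k i - r i| <= k.+1%:R^-1 by case: (hT k) => _ [_ [_ [_ [h _]]]]; exact: h.
have hcd k j : `|cs k j - c j| <= k.+1%:R^-1 by case: (hT k) => _ [_ [_ [_ [_ [h _]]]]]; exact: h.
have hk k : [/\ (forall i, row_sum (Ps k) i = rs k i), (forall j, col_sum (Ps k) j = cs k j),
      (forall i j, 0 <= Ps k i j), (forall i j, mx_pow lam (Ms k) i j = 0 -> Ps k i j = 0) &
      forall Q : 'M[R]_(n, m), (forall i j, 0 <= Q i j) -> (forall i, row_sum Q i = rs k i) ->
        (forall j, col_sum Q j = cs k j) -> (forall i j, mx_pow lam (Ms k) i j = 0 -> Q i j = 0) ->
        phi (Ps k) (mx_pow lam (Ms k)) <= phi Q (mx_pow lam (Ms k))].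
  case: (hT k) => h1 [h2 [h3 [_ [_ [_ [[h7a h7b] _]]]]]].
  by apply: OPT => // i j; rewrite mxE powR_ge0.
have inv_le1 k : (k.+1%:R^-1 : R) <= 1 by rewrite invf_le1 ?ltr0n // ler1n.
have hbnd i j : exists B : R, forall k, `|Ps k i j| <= B.
  exists (r i + 1) => k; have [hr1 _ hp0 _ _] := hk k.
  rewrite ger0_norm //; apply: le_trans (@entry_le_row R n m (Ps k) i j (hp0 i)) _.
  rewrite hr1; have := hrd k i; have := inv_le1 k.
  have := ler_norm (rs k i - r i); set d := k.+1%:R^-1; set a := `|_|; lra.
have [sg hsg [Q hQ]] := @bw_mx R n m Ps hbnd.
have sgk := @incr_ge sg hsg.
have hdel : (fun k => ((sg k).+1%:R^-1 : R)) @ \oo --> 0.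
  exact: (cvg_sub sgk (@cvg_harmonic R)).
have hMk i j : (fun k => Ms (sg k) i j) @ \oo --> M i j.
  by apply: (close_cvg _ hdel) => k; exact: hMd.
have hrk i : (fun k => rs (sg k) i) @ \oo --> r i.
  by apply: (close_cvg _ hdel) => k; exact: hrd.
have hck j : (fun k => cs (sg k) j) @ \oo --> c j.
  by apply: (close_cvg _ hdel) => k; exact: hcd.
have hQ0 i j : 0 <= Q i j.
  by apply: (lim_ge (hQ i j)); apply: ev_all => k; have [_ _ h _ _] := hk (sg k); exact: h.
have hQr i : row_sum Q i = r i.
  have h1 : (fun k => row_sum (Ps (sg k)) i) @ \oo --> row_sum Q i.
    by rewrite /row_sum; apply: cvg_sumI => j; exact: hQ.
  have h2 : (fun k => row_sum (Ps (sg k)) i) @ \oo --> r i.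
    have -> : (fun k => row_sum (Ps (sg k)) i) = (fun k => rs (sg k) i).
      by apply: funext => k; have [h _ _ _ _] := hk (sg k); exact: h.
    exact: hrk.
  exact: cvg_uniq h1 h2.
have hQc j : col_sum Q j = c j.
  have h1 : (fun k => col_sum (Ps (sg k)) j) @ \oo --> col_sum Q j.
    by rewrite /col_sum; apply: cvg_sumI => i; exact: hQ.
  have h2 : (fun k => col_sum (Ps (sg k)) j) @ \oo --> c j.
    have -> : (fun k => col_sum (Ps (sg k)) j) = (fun k => cs (sg k) j).
      by apply: funext => k; have [_ h _ _ _] := hk (sg k); exact: h.
    exact: hck.
  exact: cvg_uniq h1 h2.
have Ev : \forall k \near \oo, forall i j,
    (0 < M i j -> 0 < Ms (sg k) i j) /\ (0 < Q i j -> Q i j / 2 < Ps (sg k) i j).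
  apply: filter_forall => i; apply: filter_forall => j.
  have e1 : \forall k \near \oo, 0 < M i j -> 0 < Ms (sg k) i j.
    case: (boolP (0 < M i j)) => h; last by apply: ev_all => k h'; case/negP: h.
    by apply: filterS (ev_gt (hMk i j) h) => k hk' _.
  have e2 : \forall k \near \oo, 0 < Q i j -> Q i j / 2 < Ps (sg k) i j.
    case: (boolP (0 < Q i j)) => h; last by apply: ev_all => k h'; case/negP: h.
    have hq : Q i j / 2 < Q i j by lra.
    by apply: filterS (ev_gt (hQ i j) hq) => k hk' _.
  exact: ev_and e1 e2.
pose Ak k := mx_pow lam (Ms (sg k)).
pose Rk k : 'M[R]_(n, m) := \matrix_(i, j) (Ps (sg k) i j + (P i j - Q i j) / 2).
pose h k i j := Rk k i j * ln (Rk k i j) - Ps (sg k) i j * ln (Ps (sg k) i j) -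
   (if 0 < M i j then (P i j - Q i j) / 2 * ln (Ak k i j) else 0).
pose e k i j := if 0 < M i j then 0 else Q i j / 2 * ln (Ak k i j).
have key : \forall k \near \oo, 0 <= \sum_i \sum_j h k i j + \sum_i \sum_j e k i j.
  apply: filterS Ev => k hEv.
  have [_ _ hPk0 hPkA hPkopt] := hk (sg k).
  have hR0 i j : 0 <= Rk k i j.
    rewrite mxE; have := hP0 i j; have := hQ0 i j; have := hPk0 i j.
    case: (boolP (0 < Q i j)) => hq.
      have := (hEv i j).2 hq; lra.
    rewrite -leNgt in hq; lra.
  have hRr i : row_sum (Rk k) i = rs (sg k) i.
    have [h1 _ _ _ _] := hk (sg k).
    rewrite /row_sum; under eq_bigr do rewrite mxE.
    rewrite big_split /= -mulr_suml sumrB -/(row_sum _ i) -/(row_sum P i) -/(row_sum Q i).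
    by rewrite hPr hQr subrr mul0r addr0 h1.
  have hRc j : col_sum (Rk k) j = cs (sg k) j.
    have [_ h1 _ _ _] := hk (sg k).
    rewrite /col_sum; under eq_bigr do rewrite mxE.
    rewrite big_split /= -mulr_suml sumrB -/(col_sum _ j) -/(col_sum P j) -/(col_sum Q j).
    by rewrite hPc hQc subrr mul0r addr0 h1.
  have hRA i j : Ak k i j = 0 -> Rk k i j = 0.
    move=> hz; have hMz : Ms (sg k) i j = 0 by apply: (@powR_eq0_eq0 _ _ lam); rewrite -hz /Ak mxE.
    have hPz : Ps (sg k) i j = 0 by apply: hPkA.
    have hM0 : M i j = 0.
      apply/eqP; rewrite eq_le hM andbT leNgt; apply/negP => hm.
      by have := (hEv i j).1 hm; rewrite hMz ltxx.
    have hQz : Q i j = 0.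
      apply/eqP; rewrite eq_le hQ0 andbT leNgt; apply/negP => hq.
      have := (hEv i j).2 hq; rewrite hPz; have := hQ0 i j; lra.
    by rewrite mxE hPz hPM // hQz subrr mul0r addr0.
  have := hPkopt (Rk k) hR0 hRr hRc hRA.
  have -> : \sum_i \sum_j h k i j + \sum_i \sum_j e k i j =
      phi (Rk k) (Ak k) - phi (Ps (sg k)) (Ak k).
    rewrite /phi -sumrB -big_split; apply: eq_bigr => i _.
    rewrite -sumrB -big_split; apply: eq_bigr => j _.
    rewrite /h /e; case: (boolP (0 < M i j)) => hm.
      by rewrite (@entry_id1 _ _ (Ps (sg k) i j) ((P i j - Q i j) / 2)) // mxE.
    have hM0 : M i j = 0 by apply/eqP; rewrite eq_le hM andbT leNgt.
    by rewrite (@entry_id2 _ _ (Ps (sg k) i j) (Q i j)) // mxE hPM.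
  by rewrite subr_ge0.
pose Mid : 'M[R]_(n, m) := \matrix_(i, j) ((P i j + Q i j) / 2).
pose H i j := Mid i j * ln (Mid i j) - Q i j * ln (Q i j) -
   (if 0 < M i j then (P i j - Q i j) / 2 * ln (A i j) else 0).
have hh i j : (fun k => h k i j) @ \oo --> H i j.
  have hR : (fun k => Rk k i j) @ \oo --> Mid i j.
    have -> : (fun k => Rk k i j) = (fun k => Ps (sg k) i j + (P i j - Q i j) / 2).
      by apply: funext => k; rewrite mxE.
    have -> : Mid i j = Q i j + (P i j - Q i j) / 2 by rewrite mxE; lra.
    by apply: cvgD; [exact: hQ | exact: cvg_cst].
  have hMid0 : 0 <= Mid i j by rewrite mxE divr_ge0 // addr_ge0.
  apply: cvgB; first apply: cvgB.
  - exact: cvg_xlnx hMid0 hR.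
  - exact: cvg_xlnx (hQ0 i j) (hQ i j).
  case: (boolP (0 < M i j)) => hm; last exact: cvg_cst.
  apply: cvgM; first exact: cvg_cst.
  have -> : (fun k => ln (Ak k i j)) = (fun k => lam * ln (Ms (sg k) i j)).
    by apply: funext => k; rewrite mxE ln_powR.
  rewrite AE ln_powR; apply: cvgM; first exact: cvg_cst.
  exact: cvg_ln hm (hMk i j).
have hH : (fun k => \sum_i \sum_j h k i j) @ \oo --> \sum_i \sum_j H i j.
  by apply: cvg_sumI => i; apply: cvg_sumI => j; exact: hh.
have he_le k i j : e k i j <= 0.
  rewrite /e; case: (boolP (0 < M i j)) => hm //.
  have hM0 : M i j = 0 by apply/eqP; rewrite eq_le hM andbT leNgt.
  apply: mulr_ge0_le0; first by rewrite divr_ge0.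
  apply: ln_le0; rewrite /Ak mxE.
  have h1 : Ms (sg k) i j <= 1.
    have := hMd (sg k) i j; rewrite hM0 subr0 ger0_norm ?hMs // => h1.
    exact: le_trans h1 (inv_le1 _).
  have -> : (1 : R) = 1 `^ lam by rewrite powR1.
  by apply: ge0_ler_powR => //; rewrite ?nnegrE ?hMs // ltW.
have hse k : \sum_i \sum_j e k i j <= 0.
  by apply: sumr_le0 => i _; apply: sumr_le0 => j _; exact: he_le.
have F3 : 0 <= \sum_i \sum_j H i j.
  apply: (lim_ge hH); apply: filterS key => k hk'.
  have := hse k; lra.
have F2 i0 j0 : M i0 j0 = 0 -> Q i0 j0 = 0.
  move=> hm0; apply/eqP; rewrite eq_le hQ0 andbT leNgt; apply/negP => hq.
  pose C := \sum_i \sum_j H i j + 1.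
  have ev1 : \forall k \near \oo, \sum_i \sum_j h k i j < C.
    by apply: (ev_lt hH); rewrite /C ltrDl.
  have hq2 : Q i0 j0 / 2 < Q i0 j0 by lra.
  have ev2 := ev_gt (hQ i0 j0) hq2.
  have qlp : 0 < Q i0 j0 / 2 * lam by rewrite mulr_gt0 // divr_gt0.
  pose B := C / (Q i0 j0 / 2 * lam).
  have hBC : Q i0 j0 / 2 * lam * B = C by rewrite /B mulrC divfK // gt_eqF.
  have ev3 := nbhs_infty_ger (expR B + 1).
  apply: ev_false.
  apply: filterS (ev_and key (ev_and ev1 (ev_and ev2 ev3))) => k [hkey [hC [hP2 hN]]].
  have hnM : ~~ (0 < M i0 j0) by rewrite hm0 ltxx.
  have hse0 : \sum_i \sum_j e k i j <= e k i0 j0.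
    apply: le_trans (@sum_le_elem R 'I_n (fun i => \sum_j e k i j) i0 _) _.
      by move=> i; apply: sumr_le0 => j _; exact: he_le.
    by apply: sum_le_elem => j; exact: he_le.
  have hMpos : 0 < Ms (sg k) i0 j0.
    rewrite lt_neqAle hMs andbT; apply/negP => /eqP hz.
    have [_ _ _ hPkA _] := hk (sg k).
    have : Ps (sg k) i0 j0 = 0 by apply: hPkA; rewrite mxE -hz powR0.
    move: hP2 => /[swap] ->; have := hQ0 i0 j0; lra.
  have hMle : Ms (sg k) i0 j0 <= (sg k).+1%:R^-1.
    by have := hMd (sg k) i0 j0; rewrite hm0 subr0 ger0_norm ?hMs.
  have hsgp : 0 < ((sg k).+1%:R : R) by rewrite ltr0n.
  have hL : ln (Ms (sg k) i0 j0) < - B.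
    have h1 : ln (Ms (sg k) i0 j0) <= - ln ((sg k).+1%:R).
      by rewrite -lnV ?posrE // ler_ln ?posrE ?invr_gt0.
    apply: le_lt_trans h1 _; rewrite ltrN2 -ltr_expR lnK ?posrE //.
    have : (k%:R : R) <= (sg k).+1%:R by rewrite ler_nat; exact: leqW.
    move: hN; set z := expR B; lra.
  have he0 : e k i0 j0 = Q i0 j0 / 2 * lam * ln (Ms (sg k) i0 j0).
    by rewrite /e (negbTE hnM) /Ak mxE ln_powR mulrA.
  have : Q i0 j0 / 2 * lam * ln (Ms (sg k) i0 j0) < Q i0 j0 / 2 * lam * (- B).
    by rewrite ltr_pM2l.
  rewrite mulrN hBC -he0 => hlt.
  move: hkey hC hse0 hlt; set a := \sum_i \sum_j h k i j; set b := \sum_i \sum_j e k i j.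
  lra.
have F4 : phi P A <= phi Q A.
  apply: hPopt => // i j; rewrite AE => hz; apply: F2.
  exact: (@powR_eq0_eq0 _ _ lam).
have F3' : \sum_i \sum_j H i j = phi Mid A - phi Q A.
  rewrite /phi -sumrB; apply: eq_bigr => i _; rewrite -sumrB; apply: eq_bigr => j _.
  rewrite /H; case: (boolP (0 < M i j)) => hm.
    by apply: entry_id3; rewrite mxE; lra.
  have hM0 : M i j = 0 by apply/eqP; rewrite eq_le hM andbT leNgt.
  rewrite AE hM0 powR0 // (@ln0 R 0 (lexx 0)) !mulr0 !subr0; ring.
have conv_sum : \sum_i \sum_j (P i j * ln (P i j) + Q i j * ln (Q i j) -
    2 * (((P i j + Q i j) / 2) * ln ((P i j + Q i j) / 2))) =
    phi P A + phi Q A - 2 * phi Mid A.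
  rewrite /phi mulr_sumr -big_split -sumrB; apply: eq_bigr => i _.
  rewrite mulr_sumr -big_split -sumrB; apply: eq_bigr => j _.
  rewrite /= [Mid i j]mxE.
  set x := P i j; set y := Q i j; set a := ln (A i j); set l := ln ((x + y) / 2).
  have h2 : 2 * ((x + y) / 2) = x + y by rewrite mulrC divfK // pnatr_eq0.
  rewrite mulrBr mulrA h2 mulrA h2; ring.
have hcs0 : forall i j, 0 <= P i j * ln (P i j) + Q i j * ln (Q i j) -
    2 * (((P i j + Q i j) / 2) * ln ((P i j + Q i j) / 2)).
  by move=> i j; apply: conv_ge0.
have hsum0 : \sum_i \sum_j (P i j * ln (P i j) + Q i j * ln (Q i j) -
    2 * (((P i j + Q i j) / 2) * ln ((P i j + Q i j) / 2))) = 0.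
  apply/eqP; rewrite eq_le; apply/andP; split.
    rewrite conv_sum; move: F3; rewrite F3'; move: F4; lra.
  by apply: sumr_ge0 => i _; apply: sumr_ge0 => j _.
have PQ i j : P i j = Q i j.
  apply: conv_eq => //.
  have h1 : \sum_j (P i j * ln (P i j) + Q i j * ln (Q i j) -
      2 * (((P i j + Q i j) / 2) * ln ((P i j + Q i j) / 2))) = 0.
    by apply: (psumr_eq0P _ hsum0) => // i' _; apply: sumr_ge0 => j' _.
  by apply: (psumr_eq0P _ h1) => // j' _.
have evc : \forall k \near \oo, forall i j, `|Q i j - Ps (sg k) i j| < eps.
  apply: filter_forall => i; apply: filter_forall => j.
  by move/cvgrPdist_lt: (hQ i j) => /(_ eps heps).
apply: ev_false; apply: filterS evc => k hk'.
case: (hT (sg k)) => _ [_ [_ [_ [_ [_ [_ hb]]]]]].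
move: hb; rewrite -/(Ps (sg k)) PQ distrC.
by rewrite leNgt hk'.
Qed.
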